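(* Let $z,z',\ell \in \mathbb{N}$ and let $x\in \mathbb{R}^{z}$ and $x'\in \mathbb{R}^{z'}$ be two time series with the same set of $\ell$-profiles, i.e. $D_{(x,\ell)} = D_{(x',\ell)}$. Then for every $y \in \mathbb{R}^\ell$ we have $\mathbf{d}_{dF}(x,y) = \mathbf{d}_{dF}(x',y)$.
   Context: A traversal between sequences of lengths $z$ and $\ell$ is a sequence of index pairs $(i_1,j_1),\dots,(i_t,j_t)$ with $(i_1,j_1)=(1,1)$, $(i_t,j_t)=(z,\ell)$, and for $r<t$: $i_{r+1}-i_r\in\{0,1\}$, $j_{r+1}-j_r\in\{0,1\}$, $(i_{r+1}-i_r)+(j_{r+1}-j_r)\ge1$; $\mathcal{T}_{z,\ell}$ is the set of traversals. For $x\in\mathbb{R}^z$, $y\in\mathbb{R}^\ell$: $\mathbf{d}_{dF}(x,y)=\min_{T\in\mathcal{T}_{z,\ell}}\max_{(i,j)\in T}|x_i-y_j|$. For $x\in\mathbb{R}^z$ and $T\in\mathcal{T}_{z,\ell}$, the traversal sectors are $S_j^{(x,T)}=\{x_i: i\in[z],(i,j)\in T\}$ for $j\in[\ell]$, and the $\ell$-profile of $(x,T)$ is the sequence $\big((\min S_1^{(x,T)},\max S_1^{(x,T)}),\dots,(\min S_\ell^{(x,T)},\max S_\ell^{(x,T)})\big)$. $D_{(x,\ell)}$ is the set of all $\ell$-profiles of $(x,T)$ over all $T\in\mathcal{T}_{z,\ell}$. *)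

(* Defs.v *)
From HB Require Import structures.
From mathcomp Require Import all_boot all_order all_algebra.
From mathcomp Require Import classical_sets reals.
Set Implicit Arguments. Unset Strict Implicit. Unset Printing Implicit Defensive.
Import Order.TTheory GRing.Theory Num.Theory.
Local Open Scope ring_scope.
Local Open Scope classical_set_scope.

(* Indices are 0-based: the paper's index i in [z] is the ordinal i-1 : 'I_z. *)

Definition trav_step (z l : nat) (a b : 'I_z * 'I_l) : bool :=
  [&& (a.1 <= b.1)%N, (b.1 <= a.1.+1)%N, (a.2 <= b.2)%N, (b.2 <= a.2.+1)%N
    & a != b].

Definition is_traversal (z l : nat) (T : seq ('I_z * 'I_l)) : bool :=
  if T is p :: T' then
    [&& (p.1 == 0 :> nat), (p.2 == 0 :> nat),
        ((last p T').1 == z.-1 :> nat), ((last p T').2 == l.-1 :> nat)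
      & path (@trav_step z l) p T']
  else false.

(* max_{(i,j) in T} |x_i - y_j|  (all terms are >= 0, T is nonempty) *)
Definition trav_cost (R : realType) (z l : nat) (x : 'I_z -> R) (y : 'I_l -> R)
  (T : seq ('I_z * 'I_l)) : R :=
  \big[Num.max/0]_(p <- T) `|x p.1 - y p.2|.

(* discrete Frechet distance: minimum of the costs over all traversals
   (the set of traversals is finite and nonempty, so inf = min) *)
Definition dF (R : realType) (z l : nat) (x : 'I_z -> R) (y : 'I_l -> R) : R :=
  inf [set c | exists T : seq ('I_z * 'I_l), is_traversal T /\ c = trav_cost x y T].

Definition sector (R : realType) (z l : nat) (x : 'I_z -> R)
  (T : seq ('I_z * 'I_l)) (j : 'I_l) : seq R :=
  [seq x p.1 | p <- T & p.2 == j].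

Definition seq_min (R : realType) (s : seq R) : R :=
  \big[Num.min/head 0 s]_(v <- s) v.
Definition seq_max (R : realType) (s : seq R) : R :=
  \big[Num.max/head 0 s]_(v <- s) v.

Definition profile (R : realType) (z l : nat) (x : 'I_z -> R)
  (T : seq ('I_z * 'I_l)) : {ffun 'I_l -> R * R} :=
  [ffun j => (seq_min (sector x T j), seq_max (sector x T j))].

Definition profiles (R : realType) (z : nat) (x : 'I_z -> R) (l : nat)
  : set {ffun 'I_l -> R * R} :=
  [set P | exists T : seq ('I_z * 'I_l), is_traversal T /\ P = profile x T].
Arguments profiles {R z} x l.

(* Main.v *)
Require Import Defs.
From mathcomp Require Import all_boot all_order all_algebra.
From mathcomp Require Import classical_sets reals.
From mathcomp Require Import boolp zify.
Set Implicit Arguments. Unset Strict Implicit. Unset Printing Implicit Defensive.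
Import Order.TTheory GRing.Theory Num.Theory.
Local Open Scope ring_scope.
Local Open Scope classical_set_scope.

Section Aux.
Variable R : realType.

Lemma bigmax_ub (T : eqType) (s : seq T) (F : T -> R) a :
  a \in s -> F a <= \big[Num.max/0]_(p <- s) F p.
Proof.
elim: s => //= b s IH; rewrite in_cons big_cons => /orP [/eqP-> | /IH h].
  by rewrite le_max lexx.
by rewrite le_max h orbT.
Qed.

Lemma bigmax_lub (T : eqType) (s : seq T) (F : T -> R) B :
  0 <= B -> (forall a, a \in s -> F a <= B) -> \big[Num.max/0]_(p <- s) F p <= B.
Proof.
move=> B0; elim: s => [|b s IH] H; first by rewrite big_nil.
rewrite big_cons ge_max H ?mem_head //= IH // => a ha.
by apply: H; rewrite in_cons ha orbT.
Qed.

Lemma bigmax_ge0 (T : eqType) (s : seq T) (F : T -> R) :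
  0 <= \big[Num.max/0]_(p <- s) F p.
Proof.
elim: s => [|b s IH]; first by rewrite big_nil.
by rewrite big_cons le_max IH orbT.
Qed.

Lemma bigmin_le (s : seq R) i v : v \in s -> \big[Num.min/i]_(w <- s) w <= v.
Proof.
elim: s => //= b s IH; rewrite in_cons big_cons => /orP [/eqP-> | /IH h].
  by rewrite ge_min lexx.
by rewrite ge_min h orbT.
Qed.

Lemma bigmax_ge (s : seq R) i v : v \in s -> v <= \big[Num.max/i]_(w <- s) w.
Proof.
elim: s => //= b s IH; rewrite in_cons big_cons => /orP [/eqP-> | /IH h].
  by rewrite le_max lexx.
by rewrite le_max h orbT.
Qed.

Lemma bigmin_mem (s : seq R) i : \big[Num.min/i]_(w <- s) w \in i :: s.
Proof.
elim: s => [|b s IH]; first by rewrite big_nil mem_head.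
rewrite big_cons; set r := \big[_/_]_(_ <- _) _ in IH *.
rewrite minEle; case: ifP => _; first by rewrite !in_cons eqxx orbT.
move: IH; rewrite !in_cons => /orP [->|->] //; by rewrite !orbT.
Qed.

Lemma bigmax_mem (s : seq R) i : \big[Num.max/i]_(w <- s) w \in i :: s.
Proof.
elim: s => [|b s IH]; first by rewrite big_nil mem_head.
rewrite big_cons; set r := \big[_/_]_(_ <- _) _ in IH *.
rewrite maxEle; case: ifP => _.
  move: IH; rewrite !in_cons => /orP [->|->] //; by rewrite !orbT.
by rewrite !in_cons eqxx orbT.
Qed.

Lemma seq_min_mem (s : seq R) : s != [::] -> seq_min s \in s.
Proof.
case: s => // a s _; rewrite /seq_min /=.
have := bigmin_mem (a :: s) a; by rewrite in_cons => /orP [/eqP->|]; rewrite ?mem_head.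
Qed.

Lemma seq_max_mem (s : seq R) : s != [::] -> seq_max s \in s.
Proof.
case: s => // a s _; rewrite /seq_max /=.
have := bigmax_mem (a :: s) a; by rewrite in_cons => /orP [/eqP->|]; rewrite ?mem_head.
Qed.

Definition mx (u w : R) : R := Num.max u w.
Lemma maxr_r (u w t : R) : t <= w -> t <= mx u w.
Proof. by move=> h; rewrite /mx le_max h orbT. Qed.
Lemma maxr_l (u w t : R) : t <= u -> t <= mx u w.
Proof. by move=> h; rewrite /mx le_max h. Qed.
Lemma mx_le (u w t : R) : u <= t -> w <= t -> mx u w <= t.
Proof. by move=> h1 h2; rewrite /mx ge_max h1 h2. Qed.

Lemma norm_between (a v b c : R) : a <= v -> v <= b ->
  `|v - c| <= mx `|a - c| `|b - c|.
Proof.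
move=> av vb.
have [H|H] : `|v - c| <= `|a - c| \/ `|v - c| <= `|b - c|.
  case: (lerP c v) => h.
    right.
    apply: le_trans (ler_norm _); by rewrite lerD2r.
  left; rewrite distrC; apply: le_trans (ler_norm _); by rewrite lerD2l lerN2.
  by apply: maxr_l.
by apply: maxr_r.
Qed.


Lemma cover (z l : nat) (p : 'I_z * 'I_l) T (j : nat) :
  path (@trav_step z l) p T -> (p.2 <= j <= (last p T).2)%N ->
  exists2 q, q \in p :: T & (q.2 : nat) = j.
Proof.
elim: T p => [|b T IH] p /=.
  move=> _ hj; exists p; first by rewrite mem_head.
  by move: hj; lia.
case/andP => hs hpath hj; move: hs; rewrite /trav_step => /and5P [h1 h2 h3 h4 _].
case: (leqP j p.2) => hjp.
  exists p; first by rewrite mem_head.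
  by move: hj hjp; lia.
have hj' : (b.2 <= j <= (last b T).2)%N by move: hj hjp h4; lia.
have [q qT qj] := IH b hpath hj'.
by exists q => //; rewrite in_cons qT orbT.
Qed.

Variables (z l : nat) (x : 'I_z -> R) (y : 'I_l -> R).

Definition fP (P : {ffun 'I_l -> R * R}) : R :=
  \big[Num.max/0]_(j <- index_enum 'I_l) mx `|(P j).1 - y j| `|(P j).2 - y j|.

Lemma cost_prof T : is_traversal T -> trav_cost x y T = fP (profile x T).
Proof.
move=> hT; apply/le_anti/andP; split.
  rewrite /trav_cost; apply: bigmax_lub; first exact: bigmax_ge0.
  move=> p pT.
  apply: le_trans (bigmax_ub _ (mem_index_enum p.2)).
  rewrite ffunE /=.
  have hs : x p.1 \in sector x T p.2.
    by apply/mapP; exists p; rewrite // mem_filter eqxx pT.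
  apply: norm_between; first exact: bigmin_le.
  exact: bigmax_ge.
apply: bigmax_lub; first exact: bigmax_ge0.
move=> j _; rewrite ffunE /=.
have ne : sector x T j != [::].
  case: T hT => // p T' /and5P [h1 h2 h3 h4 hp].
  have hj' : (p.2 <= j <= (last p T').2)%N.
    rewrite (eqP h2) (eqP h4) /=; have := ltn_ord j; lia.
  have [q qT qj] := cover hp hj'.
  apply/eqP => E.
  have : x q.1 \in sector x (p :: T') j.
    apply/mapP; exists q => //; rewrite mem_filter qT andbT.
    by apply/eqP; apply: val_inj.
  by rewrite E.
apply: mx_le.
  have := seq_min_mem ne; case/mapP => p; rewrite mem_filter => /andP [/eqP pj pT] ->.
  rewrite -pj; exact: (bigmax_ub (fun p => `|x p.1 - y p.2|) pT).
have := seq_max_mem ne; case/mapP => p; rewrite mem_filter => /andP [/eqP pj pT] ->.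
rewrite -pj; exact: (bigmax_ub (fun p => `|x p.1 - y p.2|) pT).
Qed.

End Aux.

Theorem lemma9p9 (R : realType) (z z' l : nat) (x : 'I_z -> R) (x' : 'I_z' -> R) :
  profiles x l = profiles x' l ->
  forall y : 'I_l -> R, dF x y = dF x' y.
Proof.
move=> hP y; rewrite /dF; congr inf.
apply/seteqP; split => c [T [hT ->]].
  have : profiles x l (profile x T) by exists T.
  rewrite hP => -[T' [hT' E]]; exists T'; split => //.
  by rewrite !cost_prof // E.
have : profiles x' l (profile x' T) by exists T.
rewrite -hP => -[T' [hT' E]]; exists T'; split => //.
by rewrite !cost_prof // E.
Qed.
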